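(* Let $\Sigma\in\mathbb R^{d\times d}$ be symmetric positive definite, $a\in\mathbb R^d$, $\lambda>0$. Let $w_t,\hat w_t$ solve the gradient flows $\frac{d}{dt}w_t=-(\Sigma w_t-a)$, $\frac{d}{dt}\hat w_t=-(\Sigma\hat w_t-a+\lambda\hat w_t)$ with $w_0=\hat w_0=0$, so $w_t=(I-e^{-\Sigma t})\Sigma^{-1}a$ and $\hat w_t=(I-e^{-(\Sigma+\lambda I)t})(\Sigma+\lambda I)^{-1}a$. With the continuous weighting scheme $P_t=1-e^{-\lambda t}$, $p_t=\lambda e^{-\lambda t}$, and $\tilde w_t=P_t^{-1}\int_0^tp_sw_s\,ds$, we have for all $t>0$ $$\hat w_t-\tilde w_t=(1-P_t)(w_t-\tilde w_t).$$
   Context: This is the gradient-flow limit of gradient descent for $L(w)=\frac12w^\top\Sigma w-w^\top a$ and its $\ell_2$-regularized version $L(w)+\frac\lambda2\|w\|_2^2$. *)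

(* Defs.v *)
From HB Require Import structures.
From mathcomp Require Import all_boot all_order all_algebra.
From mathcomp Require Import all_classical all_reals all_analysis.
Set Implicit Arguments. Unset Strict Implicit. Unset Printing Implicit Defensive.
Import Order.TTheory GRing.Theory Num.Theory.
Import numFieldNormedType.Exports.
Local Open Scope ring_scope.
Local Open Scope classical_set_scope.

Definition sym_posdef (R : realType) (d : nat) (S : 'M[R]_d) : Prop :=
  S^T = S /\ forall v : 'cV[R]_d, v != 0 -> 0 < (v^T *m S *m v) 0 0.

Definition Pw (R : realType) (lam t : R) : R := 1 - expR (- (lam * t)).
Definition pw (R : realType) (lam t : R) : R := lam * expR (- (lam * t)).

Definition wtilde (R : realType) (d : nat) (lam : R) (w : R -> 'cV[R]_d) (t : R)
  : 'cV[R]_d :=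
  \col_i ((Pw lam t)^-1 *
          Rintegral (@lebesgue_measure R) `[0, t] (fun s => pw lam s * w s i 0)).

(* Main.v *)
Require Import Defs.
From HB Require Import structures.
From mathcomp Require Import all_boot all_order all_algebra.
From mathcomp Require Import all_classical all_reals all_analysis.
From mathcomp Require Import ring lra.
Import Order.TTheory GRing.Theory Num.Theory.
Import numFieldNormedType.Exports.
Local Open Scope ring_scope.
Local Open Scope classical_set_scope.
Lemma is_derive_coord {R : realType} {m n} {f : R -> 'M[R]_(m,n)} {x : R} {df} i j :
  is_derive x 1 f df -> is_derive x 1 (fun t => f t i j) (df i j).
Proof.
move=> [Hd Hv].
have H : (fun h : R => h^-1 *: ((f \o shift x) (h *: 1) - f x)) @ 0^' --> df.
  by rewrite -Hv; exact: Hd.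
have H2 := cvg_comp _ _ H (@coord_continuous R m n i j df).
have E : (fun M : 'M[R]_(m,n) => M i j) \o (fun h : R => h^-1 *: ((f \o shift x) (h *: 1) - f x))
   = (fun h : R => h^-1 *: (((fun t => f t i j) \o shift x) (h *: 1) - f x i j)).
  by apply/funext => h /=; rewrite !mxE.
rewrite E in H2.
apply: DeriveDef; first by apply/cvg_ex; exists (df i j).
exact: cvg_lim.
Qed.
Lemma is_derive_eqf {R : realType} (W : normedModType R) (f g : R -> W) (x : R) df dg :
  f =1 g -> df = dg -> is_derive x 1 f df -> is_derive x 1 g dg.
Proof. by move=> /funext -> ->. Qed.

Lemma is_derive_sumf {R : realType} {n} {h : 'I_n -> R -> R} {x : R} {dh} :
  (forall k, is_derive x 1 (h k) (dh k)) ->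
  is_derive x 1 (fun t => \sum_(k < n) h k t) (\sum_(k < n) dh k).
Proof.
move=> H; apply: is_derive_eqf (is_derive_sum H) => // t.
by rewrite fct_sumE.
Qed.

Lemma is_derive_expN {R : realType} (lam x : R) :
  is_derive x 1 (fun s => expR (- (lam * s))) (- lam * expR (- (lam * x))).
Proof.
have H1 : is_derive x 1 (fun s : R => - (lam * s)) (- lam).
  apply: is_derive_eqf (is_deriveN (is_deriveZ lam (is_derive_id x 1))) => //.
  by rewrite [_%:A]mulr1.
apply: is_derive_eqf (is_derive1_comp (is_derive_expR _) H1) => //.
by rewrite mulrC.
Qed.

Lemma is_derive_mulmx_coord {R : realType} {m n p} (A : 'M[R]_(m,n))
  {f : R -> 'M[R]_(n,p)} {x : R} {df} i j :
  is_derive x 1 f df -> is_derive x 1 (fun t => (A *m f t) i j) ((A *m df) i j).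
Proof.
move=> H.
have H2 := @is_derive_sumf R n (fun k t => A i k * f t k j) x (fun k => A i k * df k j)
  (fun k => is_deriveZ (A i k) (is_derive_coord k j H)).
apply: is_derive_eqf H2.
  by move=> t /=; rewrite mxE; apply: eq_bigr => k _.
by rewrite mxE; apply: eq_bigr => k _.
Qed.

Lemma quad_ge0 (R : realType) d (S : 'M[R]_d) (v : 'cV[R]_d) :
  sym_posdef S -> 0 <= (v^T *m S *m v) 0 0.
Proof.
move=> [_ Sp]; case: (eqVneq v 0) => [->|/Sp/ltW//].
by rewrite mulmx0 mxE.
Qed.

Theorem mainTheorem9 (R : realType) (d : nat) (Sigma : 'M[R]_d) (a : 'cV[R]_d)
  (lam : R) (w what : R -> 'cV[R]_d) :
  sym_posdef Sigma -> 0 < lam ->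
  (forall t : R, is_derive t 1 w (- (Sigma *m w t - a))) ->
  (forall t : R, is_derive t 1 what (- (Sigma *m what t - a + lam *: what t))) ->
  w 0 = 0 -> what 0 = 0 ->
  forall t : R, 0 < t ->
    what t - wtilde lam w t = (1 - Pw lam t) *: (w t - wtilde lam w t).
Proof.
move=> SP lam0 dw dwh w0 wh0 t t0.
pose e := fun s : R => expR (- (lam * s)).
pose dW := fun s => - (Sigma *m w s - a).
pose dH := fun s => - (Sigma *m what s - a + lam *: what s).
pose K := fun s => dH s - e s *: dW s.
have De (s : R) : is_derive s 1 e (- lam * e s) by exact: is_derive_expN.
have DK (s : R) i : is_derive s 1 (fun s => K s i 0) (- ((Sigma *m K s) i 0 + lam * K s i 0)).
  have D1 := is_derive_mulmx_coord Sigma i 0 (dwh s).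
  have D2 := is_derive_coord i 0 (dwh s).
  have D3 := is_derive_mulmx_coord Sigma i 0 (dw s).
  have := is_deriveB (is_deriveN (is_deriveD (is_deriveB D1 (is_derive_cst (a i 0) s 1))
      (is_deriveZ lam D2))) (is_deriveM (De s) (is_deriveN (is_deriveB D3 (is_derive_cst (a i 0) s 1)))).
  apply: is_derive_eqf.
    by move=> u /=; rewrite /K /dH /dW !fctE !mxE.
  rewrite /K mulmxBr -scalemxAr -/(dH s) -/(dW s) /=.
  move: (Sigma *m dH s) (Sigma *m dW s) => SH SW.
  rewrite /dH /dW !fctE !mxE /=.
  rewrite /GRing.scale /=.
  ring.
have K0 : K 0 = 0.
  rewrite /K /dH /dW w0 wh0 mulmx0 scaler0 /e mulr0 oppr0 expR0 scale1r.
  by rewrite addr0 subrr.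
pose N := fun s => \sum_(i < d) K s i 0 ^+ 2.
pose dN := fun s => \sum_(i < d) (2 * K s i 0 * (- ((Sigma *m K s) i 0 + lam * K s i 0))).
have DN (s : R) : is_derive s 1 N (dN s).
  have H := is_derive_sumf (fun i => is_deriveX 2%N (DK s i)). apply: is_derive_eqf H.
    by move=> u; apply: eq_bigr => i _.
  apply: eq_bigr => i _; rewrite expr1 /GRing.scale /=; ring.
have N0 : N 0 = 0 by rewrite /N; apply: big1 => i _; rewrite K0 mxE expr0n.
have Nge0 s : 0 <= N s by apply: sumr_ge0 => i _; exact: sqr_ge0.
have dN_le0 (s : R) : dN s <= 0.
  have E : dN s = - (2 * ((K s)^T *m Sigma *m K s) 0 0 + 2 * lam * N s).
    rewrite /dN /N -mulmxA mxE.
    move: (K s) => v; move: (Sigma *m v) => SK.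
    rewrite mulr_sumr mulr_sumr -big_split -sumrN; apply: eq_bigr => i _.
    rewrite mxE /=; ring.
  rewrite E; have := @quad_ge0 R d Sigma (K s) SP; have := Nge0 s; nra.
have Kz (s : R) : 0 <= s -> forall i, K s i 0 = 0.
  move=> s0 i.
  have Ns : N s <= 0.
    have cN : {within `[0, s], continuous N}.
      by apply: derivable_within_continuous => x _; by case: (DN x).
    have [c _ Hc] := MVT_segment s0 (fun x _ => DN x) cN.
    move: Hc; rewrite N0 !subr0 => ->; have := dN_le0 c; nra.
  have N0s : N s = 0 by apply/eqP; rewrite eq_le Ns Nge0.
  have := psumr_eq0P (fun j _ => sqr_ge0 (K s j 0)) N0s (i:=i) isT.
  by move/eqP; rewrite sqrf_eq0 => /eqP.
apply/matrixP => i j; rewrite (ord1 j) !mxE.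
pose F := fun s => what s i 0 - e s * w s i 0.
pose f := fun s => pw lam s * w s i 0.
have DF (s : R) : is_derive s 1 F (dH s i 0 - (e s *: dW s i 0 + w s i 0 *: (- lam * e s))).
  exact: is_deriveB (is_derive_coord i 0 (dwh s)) (is_deriveM (De s) (is_derive_coord i 0 (dw s))).
have Dpw (s : R) : is_derive s 1 (pw lam) (lam * (- lam * e s)).
  by apply: is_derive_eqf (is_deriveZ lam (De s)).
have Df (s : R) : derivable f s 1.
  by case: (is_deriveM (Dpw s) (is_derive_coord i 0 (dw s))).
have cF (x : R) : {for x, continuous F}.
  by apply: differentiable_continuous; apply/derivable1_diffP; case: (DF x).
have cf : {within `[0, t], continuous f}.
  by apply: derivable_within_continuous => x _; exact: Df.
have dF : derivable_oo_LRcontinuous F 0 t.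
  split.
  - by move=> x _; case: (DF x).
  - exact: cvg_at_right_filter (cF 0).
  - exact: cvg_at_left_filter (cF t).
have F'f : {in `]0, t[%R, F^`() =1 f}.
  move=> x; rewrite in_itv /= => /andP [x0 _]; rewrite derive1E derive_val.
  have := Kz x (ltW x0) i.
  have -> : K x i 0 = dH x i 0 - e x * dW x i 0 by rewrite /K !mxE.
  move=> /eqP; rewrite subr_eq0 => /eqP ->.
  rewrite /f /pw /GRing.scale /= -/(e x); ring.
have FTC := continuous_FTC2 t0 cf dF F'f.
have RI : Rintegral (@lebesgue_measure R) `[0, t] f = F t.
  by rewrite /Rintegral FTC /F w0 wh0 !mxE /= mulr0 !subr0.
rewrite RI /F /Pw -/(e t).
have et1 : e t < 1 by rewrite /e expR_lt1 oppr_lt0 mulr_gt0.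
have Pn0 : 1 - e t != 0 by rewrite subr_eq0 eq_sym lt_eqF.
by field.
Qed.
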